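(* Let $(S,\gamma)$ be a $C^\infty$ surface with boundary in $\mathbf{R}^3$, and suppose the boundary $\gamma$ is of finite type $(1,1+s,1+s+r)$ at $t=t_0$ (for positive integers $r,s$). Then $\gamma(t_0)$ is an osculating-tangent point if and only if $\kappa_2^{(s-1)}(t_0)=0$.
   Context: $S\subset\mathbf{R}^3$ is a co-oriented immersed $C^\infty$ surface with boundary curve $\gamma$, parametrised by arc length $t$; $f^{(j)}$ denotes the $j$-th derivative in $t$. Adapted frame: $\boldsymbol e_1=\gamma'$, $\boldsymbol e_3=\boldsymbol n$ the unit normal of $S$, $\boldsymbol e_2=\boldsymbol e_3\times\boldsymbol e_1$; $\kappa_1,\kappa_2,\kappa_3$ are defined by $\boldsymbol e_1'=\kappa_1\boldsymbol e_2+\kappa_2\boldsymbol e_3$, $\boldsymbol e_2'=-\kappa_1\boldsymbol e_1+\kappa_3\boldsymbol e_3$, $\boldsymbol e_3'=-\kappa_2\boldsymbol e_1-\kappa_3\boldsymbol e_2$. The curve $\gamma$ is of finite type at $t_0$ if $A_m(t_0)=(\gamma'(t_0),\dots,\gamma^{(m)}(t_0))$ has rank $3$ for some $m$; its type is $(a_1,a_2,a_3)$ with $a_i=\min\{m:\mathrm{rank}A_m(t_0)=i\}$. The osculating plane at $t_0$ is the plane through $\gamma(t_0)$ spanned by $\gamma^{(a_1)}(t_0)$ and $\gamma^{(a_2)}(t_0)$. $\gamma(t_0)$ is an osculating-tangent point if this osculating plane equals $T_{\gamma(t_0)}S$. *)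

(* Defs.v *)
From HB Require Import structures.
From mathcomp Require Import all_boot all_order all_algebra.
From mathcomp Require Import all_classical all_reals all_analysis.
Set Implicit Arguments. Unset Strict Implicit. Unset Printing Implicit Defensive.
Import Order.TTheory GRing.Theory Num.Theory.
Import numFieldNormedType.Exports.
Local Open Scope ring_scope.
Local Open Scope classical_set_scope.

Section Defs.
Variable R : realType.

Definition vec3 := 'rV[R]_3.

Definition dot (u v : vec3) : R := (u *m v^T) 0 0.

Definition dern (V : normedModType R) (j : nat) (f : R -> V) : R -> V :=
  derive1n j f.

Definition smooth (V : normedModType R) (f : R -> V) : Prop :=
  forall (j : nat) (t : R), derivable (dern j f) t 1.

(* A_m(t0) = (gamma'(t0), ..., gamma^(m)(t0)); stored with these vectors as rows *)
Definition Amat (g : R -> vec3) (t0 : R) (m : nat) : 'M[R]_(m, 3) :=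
  \matrix_(i < m, j < 3) dern i.+1 g t0 0 j.

Definition finite_type_at (g : R -> vec3) (t0 : R) : Prop :=
  exists m, \rank (Amat g t0 m) = 3%N.

Definition is_min_rank_index (g : R -> vec3) (t0 : R) (i a : nat) : Prop :=
  \rank (Amat g t0 a) = i /\ forall m, \rank (Amat g t0 m) = i -> (a <= m)%N.

Definition has_type_at (g : R -> vec3) (t0 : R) (a1 a2 a3 : nat) : Prop :=
  finite_type_at g t0 /\
  is_min_rank_index g t0 1 a1 /\ is_min_rank_index g t0 2 a2 /\
  is_min_rank_index g t0 3 a3.

(* Data of a co-oriented smooth surface S along its boundary curve gamma:
   gamma parametrised by arc length, and the unit normal n of S along gamma
   (n(t) is orthogonal to gamma'(t), so T_{gamma(t)}S = n(t)^perp). *)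
Definition surface_boundary_data (g n : R -> vec3) : Prop :=
  smooth g /\ smooth n /\
  (forall t, dot (dern 1 g t) (dern 1 g t) = 1) /\
  (forall t, dot (n t) (n t) = 1) /\
  (forall t, dot (n t) (dern 1 g t) = 0).

Definition cross (u v : vec3) : vec3 :=
  \row_(k < 3)
    (if k == 0 :> nat then u 0 1 * v 0 2 - u 0 2 * v 0 1
     else if k == 1 :> nat then u 0 2 * v 0 0 - u 0 0 * v 0 2
     else u 0 0 * v 0 1 - u 0 1 * v 0 0).

Definition e1 (g : R -> vec3) : R -> vec3 := dern 1 g.
Definition e3 (n : R -> vec3) : R -> vec3 := n.
Definition e2 (g n : R -> vec3) : R -> vec3 := fun t => cross (e3 n t) (e1 g t).

(* e1' = kappa1 e2 + kappa2 e3 with (e1,e2,e3) orthonormal, so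
   kappa2 = <e1', e3> *)
Definition kappa2 (g n : R -> vec3) : R -> R :=
  fun t => dot (dern 1 (e1 g) t) (e3 n t).

Definition osculating_plane (g : R -> vec3) (t0 : R) (a1 a2 : nat) : set vec3 :=
  [set p | exists a b : R,
     p = g t0 + a *: dern a1 g t0 + b *: dern a2 g t0].

Definition tangent_plane (g n : R -> vec3) (t0 : R) : set vec3 :=
  [set p | dot (p - g t0) (n t0) = 0].

Definition osculating_tangent_point (g n : R -> vec3) (t0 : R) (a1 a2 : nat) : Prop :=
  osculating_plane g t0 a1 a2 = tangent_plane g n t0.

End Defs.

(* Main.v *)
Require Import Defs.
From HB Require Import structures.
From mathcomp Require Import all_boot all_order all_algebra.
From mathcomp Require Import all_classical all_reals all_analysis.
From mathcomp Require Import ring lra.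
Import Order.TTheory GRing.Theory Num.Theory.
Import numFieldNormedType.Exports.
Local Open Scope ring_scope.
From mathcomp Require Import zify.
Lemma dotE (R : realType) (u v : vec3 R) :
  dot u v = u 0 0 * v 0 0 + u 0 1 * v 0 1 + u 0 2 * v 0 2.
Proof.
rewrite /dot mxE !big_ord_recr big_ord0 /= !mxE add0r.
by repeat f_equal; apply/val_inj.
Qed.

Lemma dotC (R : realType) (u v : vec3 R) : dot u v = dot v u.
Proof. by rewrite !dotE; ring. Qed.

Lemma dotDl (R : realType) (u v w : vec3 R) : dot (u + v) w = dot u w + dot v w.
Proof. by rewrite !dotE !mxE; ring. Qed.

Lemma dotZl (R : realType) (a : R) (u w : vec3 R) : dot (a *: u) w = a * dot u w.
Proof. by rewrite !dotE !mxE; ring. Qed.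

Lemma dotBl (R : realType) (u v w : vec3 R) : dot (u - v) w = dot u w - dot v w.
Proof. by rewrite !dotE !mxE; ring. Qed.

Lemma dot0l (R : realType) (w : vec3 R) : dot 0 w = 0.
Proof. by rewrite !dotE !mxE; ring. Qed.

Lemma frame (R : realType) (u n w : vec3 R) :
  dot u u = 1 -> dot n n = 1 -> dot u n = 0 ->
  w = dot w u *: u + dot w (cross n u) *: cross n u + dot w n *: n.
Proof.
rewrite !dotE => huu hnn hun.
apply/rowP => k; rewrite !mxE.
move: huu hnn hun.
case: k => -[|[|[|//]]] Hk /=;
  [have -> : Ordinal Hk = 0 :> 'I_3 by apply/val_inj
  |have -> : Ordinal Hk = 1 :> 'I_3 by apply/val_inj
  |have -> : Ordinal Hk = 2 :> 'I_3 by apply/val_inj];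
move: (u 0 0) (u 0 1) (u 0 2) (n 0 0) (n 0 1) (n 0 2) (w 0 0) (w 0 1) (w 0 2)
  => u0 u1 u2 n0 n1 n2 w0 w1 w2 huu hnn hun.
- have Id : (n0 * n0 + n1 * n1 + n2 * n2) * (u0 * u0 + u1 * u1 + u2 * u2) * w0
     - (u0 * n0 + u1 * n1 + u2 * n2) * (u0 * n0 + u1 * n1 + u2 * n2) * w0 =
    ((w0 * n0 + w1 * n1 + w2 * n2) * (u0 * u0 + u1 * u1 + u2 * u2)
      - (w0 * u0 + w1 * u1 + w2 * u2) * (u0 * n0 + u1 * n1 + u2 * n2)) * n0
    + ((w0 * u0 + w1 * u1 + w2 * u2) * (n0 * n0 + n1 * n1 + n2 * n2)
      - (w0 * n0 + w1 * n1 + w2 * n2) * (u0 * n0 + u1 * n1 + u2 * n2)) * u0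
    + (w0 * (n1 * u2 - n2 * u1) + w1 * (n2 * u0 - n0 * u2) + w2 * (n0 * u1 - n1 * u0))
      * (n1 * u2 - n2 * u1) by ring.
  rewrite huu hnn hun in Id; lra.
- have Id : (n0 * n0 + n1 * n1 + n2 * n2) * (u0 * u0 + u1 * u1 + u2 * u2) * w1
     - (u0 * n0 + u1 * n1 + u2 * n2) * (u0 * n0 + u1 * n1 + u2 * n2) * w1 =
    ((w0 * n0 + w1 * n1 + w2 * n2) * (u0 * u0 + u1 * u1 + u2 * u2)
      - (w0 * u0 + w1 * u1 + w2 * u2) * (u0 * n0 + u1 * n1 + u2 * n2)) * n1
    + ((w0 * u0 + w1 * u1 + w2 * u2) * (n0 * n0 + n1 * n1 + n2 * n2)
      - (w0 * n0 + w1 * n1 + w2 * n2) * (u0 * n0 + u1 * n1 + u2 * n2)) * u1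
    + (w0 * (n1 * u2 - n2 * u1) + w1 * (n2 * u0 - n0 * u2) + w2 * (n0 * u1 - n1 * u0))
      * (n2 * u0 - n0 * u2) by ring.
  rewrite huu hnn hun in Id; lra.
- have Id : (n0 * n0 + n1 * n1 + n2 * n2) * (u0 * u0 + u1 * u1 + u2 * u2) * w2
     - (u0 * n0 + u1 * n1 + u2 * n2) * (u0 * n0 + u1 * n1 + u2 * n2) * w2 =
    ((w0 * n0 + w1 * n1 + w2 * n2) * (u0 * u0 + u1 * u1 + u2 * u2)
      - (w0 * u0 + w1 * u1 + w2 * u2) * (u0 * n0 + u1 * n1 + u2 * n2)) * n2
    + ((w0 * u0 + w1 * u1 + w2 * u2) * (n0 * n0 + n1 * n1 + n2 * n2)
      - (w0 * n0 + w1 * n1 + w2 * n2) * (u0 * n0 + u1 * n1 + u2 * n2)) * u2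
    + (w0 * (n1 * u2 - n2 * u1) + w1 * (n2 * u0 - n0 * u2) + w2 * (n0 * u1 - n1 * u0))
      * (n0 * u1 - n1 * u0) by ring.
  rewrite huu hnn hun in Id; lra.
Qed.
Lemma dernS (R : realType) (V : normedModType R) k (f : R -> V) :
  dern k.+1 f = derive1 (dern k f).
Proof. by rewrite /dern derive1nS. Qed.

Lemma dernD (R : realType) (V : normedModType R) i j (f : R -> V) :
  dern i (dern j f) = dern (i + j) f.
Proof. by rewrite /dern /derive1n iterD. Qed.

Lemma dern0 (R : realType) (V : normedModType R) (f : R -> V) : dern 0 f = f.
Proof. by []. Qed.

Lemma dern_cst (R : realType) (V : normedModType R) k (c : V) :
  dern k.+1 (fun _ : R => c) = fun _ => 0.
Proof.
elim: k => [|k IH].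
  by rewrite dernS dern0; apply/funext => t; rewrite derive1_cst.
by rewrite dernS IH; apply/funext => t; rewrite derive1_cst.
Qed.

Lemma dot_derive (R : realType) (f h : R -> vec3 R) t :
  derivable f t 1 -> derivable h t 1 ->
  derivable (fun x => dot (f x) (h x)) t 1 /\
  'D_1 (fun x => dot (f x) (h x)) t = dot ('D_1 f t) (h t) + dot (f t) ('D_1 h t).
Proof.
move=> df dh.
have dfj := (derivable_mxP f t 1).1 df 0.
have dhj := (derivable_mxP h t 1).1 dh 0.
have -> : (fun x => dot (f x) (h x)) =
  ((fun x => f x 0 0) * (fun x => h x 0 0) + (fun x => f x 0 1) * (fun x => h x 0 1))
  + (fun x => f x 0 2) * (fun x => h x 0 2).
  by apply/funext => x; rewrite dotE.
split.
  by apply: derivableD; [apply: derivableD|]; apply: derivableM.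
rewrite deriveD; [|apply: derivableD; apply: derivableM =>//|apply: derivableM => //].
rewrite deriveD; [|apply: derivableM =>//|apply: derivableM => //].
rewrite !deriveM // (derive_mx df) (derive_mx dh) !dotE !mxE /=.
rewrite -![_ *: _]/(_ * _).
ring.
Qed.
Lemma pascal (R : realType) (F : nat -> nat -> R) k :
  \sum_(i < k.+1) 'C(k, i)%:R * (F i.+1 (k - i)%N + F i (k - i).+1) =
  \sum_(i < k.+2) 'C(k.+1, i)%:R * F i (k.+1 - i)%N.
Proof.
rewrite [RHS]big_ord_recl /= bin0 subn0.
under [X in _ = _ + X]eq_bigr => i _ do
  rewrite /bump /= add1n binS subSS natrD mulrDl.
rewrite big_split /=.
under eq_bigr => i _ do rewrite mulrDr.
rewrite big_split /= addrC [RHS]addrA; congr (_ + _).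
rewrite big_ord_recl /= bin0 subn0; congr (_ + _).
rewrite [RHS]big_ord_recr /= bin_small // mul0r addr0.
apply: eq_bigr => i _; rewrite /bump /= add1n subnSK //.
Qed.
Lemma derive_cmul (R : realType) (c : R) (g : R -> R) t :
  derivable g t 1 ->
  derivable (fun x => c * g x) t 1 /\ 'D_1 (fun x => c * g x) t = c * 'D_1 g t.
Proof.
move=> dg.
have -> : (fun x => c * g x) = c \*: g by apply/funext.
split; first exact: derivableZ.
by rewrite deriveZ.
Qed.

Lemma leib (R : realType) (f h : R -> vec3 R) : smooth f -> smooth h -> forall k,
  dern k (fun x => dot (f x) (h x)) =
  fun t => \sum_(i < k.+1) 'C(k, i)%:R * dot (dern i f t) (dern (k - i) h t).
Proof.
move=> sf sh; elim => [|k IH].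
  by apply/funext => t; rewrite big_ord1 /= bin0 mul1r.
rewrite dernS IH; apply/funext => t; rewrite derive1E.
have -> : (fun t => \sum_(i < k.+1) 'C(k, i)%:R * dot (dern i f t) (dern (k - i) h t))
   = \sum_(i < k.+1) (fun t => 'C(k, i)%:R * dot (dern i f t) (dern (k - i) h t)).
  by rewrite fct_sumE.
have D i : derivable (fun t => dot (dern i f t) (dern (k - i) h t)) t 1.
  by case: (dot_derive _ _ _ _ (sf i t) (sh (k - i)%N t)).
rewrite derive_sum; last by move=> i; case: (derive_cmul _ ('C(k, i)%:R) _ _ (D i)).
rewrite -(pascal _ (fun a b => dot (dern a f t) (dern b h t))).
apply: eq_bigr => i _.
case: (derive_cmul _ ('C(k, i)%:R) _ _ (D i)) => _ ->; congr (_ * _).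
case: (dot_derive _ _ _ _ (sf i t) (sh (k - i)%N t)) => _ ->.
by rewrite !dernS !derive1E.
Qed.
Lemma span2 (R : realType) (u v n w : vec3 R) :
  dot u u = 1 -> dot n n = 1 -> dot u n = 0 -> dot v n = 0 -> dot w n = 0 ->
  (~ exists c, v = c *: u) -> exists a b, w = a *: u + b *: v.
Proof.
move=> huu hnn hun hvn hwn npar.
have Fv := frame _ u n v huu hnn hun; have Fw := frame _ u n w huu hnn hun.
rewrite hvn scale0r addr0 in Fv; rewrite hwn scale0r addr0 in Fw.
move: Fv Fw; set e := cross n u.
move: (dot v u) (dot v e) (dot w u) (dot w e) => vu be wu we Fv Fw.
have [b0|bn0] := eqVneq be 0.
  by exfalso; apply: npar; exists vu; rewrite Fv b0 scale0r addr0.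
exists (wu - we * vu / be), (we / be).
rewrite Fw Fv; apply/rowP => k; rewrite !mxE; field.
by [].
Qed.

Lemma rowA (R : realType) (g : R -> vec3 R) t0 m (i : 'I_m) :
  row i (Amat g t0 m) = dern i.+1 g t0.
Proof. by apply/rowP => j; rewrite !mxE. Qed.
Arguments dern : simpl never.
Theorem theorem3p2 (R : realType) (g n : R -> vec3 R) (t0 : R) (r s : nat) :
  (0 < r)%N -> (0 < s)%N ->
  surface_boundary_data g n ->
  has_type_at g t0 1 (1 + s) (1 + s + r) ->
  (osculating_tangent_point g n t0 1 (1 + s) <->
   dern (s - 1) (kappa2 g n) t0 = 0).
Proof.
move=> r0 s0 [sg [sn [hg1 [hn1 hng]]]] [_ [_ [[r2 m2] [_ m3]]]].
set u := dern 1 g t0.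
have huu : dot u u = 1 by apply: hg1.
have hun : dot u (n t0) = 0 by rewrite dotC; apply: hng.
have hnn : dot (n t0) (n t0) = 1 by apply: hn1.
have u0 : u != 0.
  by apply/eqP => u0; move: huu; rewrite u0 dot0l => /eqP; rewrite eq_sym oner_eq0.
have ru : \rank u = 1%N by rewrite rank_rV u0.
have rs : (\rank (Amat g t0 s) <= 1)%N.
  have := rank_leq_col (Amat g t0 s).
  have h2 : \rank (Amat g t0 s) <> 2%N.
    by move=> /m2; rewrite add1n ltnn.
  have h3 : \rank (Amat g t0 s) <> 3%N.
    by move=> /m3 => h; move: h; rewrite leqNgt -addnA add1n ltnS leq_addr.
  by lia.
have par : forall i, (i < s)%N -> exists c, dern i.+1 g t0 = c *: u.
  move=> i his.
  pose A := Amat g t0 s.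
  have uA : (u <= A)%MS by rewrite (_ : u = row (Ordinal s0) A) ?row_sub // rowA.
  have Au : (A <= u)%MS.
    rewrite -(mxrank_leqif_sup uA).2 ru; apply/eqP.
    have := mxrank_leqif_sup uA; rewrite ru => -[h _]; move: rs; rewrite -/A.
    by move=> hA; apply/eqP; rewrite eqn_leq h hA.
  have : (row (Ordinal his) A <= u)%MS by exact: submx_trans (row_sub _ _) Au.
  by rewrite rowA => /sub_rVP.
have sg1 : smooth (dern 1 g).
  by move=> j t; rewrite dernD; apply: sg.
have vanish : forall m k, (k <= m)%N -> (2 <= k)%N -> (k <= s)%N -> dern k g t0 = 0.
  elim=> [|m IH] k km k2 ks; first by lia.
  case: k km k2 ks => [|[|p]] // km _ ks.
  have L := leib _ _ _ sg1 sg1 p.+1.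
  rewrite (_ : (fun x => dot (dern 1 g x) (dern 1 g x)) = (fun _ => 1)) in L;
    last by apply/funext => x; apply: hg1.
  have {L} := congr1 (fun f => f t0) L; rewrite dern_cst /=.
  rewrite big_ord_recl big_ord_recr /= big1; last first.
    move=> j _; rewrite /bump /= !dernD.
    by rewrite (IH (j.+1 + 1)%N) ?dot0l ?mulr0 //; have := ltn_ord j; lia.
  rewrite /bump /= add1n bin0 binn subn0 subnn !dernD !mul1r add0r ?addn1 ?add0n -/u.
  have [c hc] := par p.+1 ks.
  rewrite hc [dot u _]dotC dotZl huu mulr1 => /esym /eqP.
  by rewrite -mulr2n mulrn_eq0 /= => /eqP ->; rewrite scale0r.
have sg2 : smooth (dern 2 g).
  by move=> j t; rewrite dernD; apply: sg.
have kap : dern (s - 1) (kappa2 g n) t0 = dot (dern (1 + s) g t0) (n t0).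
  have -> : kappa2 g n = fun t => dot (dern 2 g t) (n t).
    by apply/funext => t; rewrite /kappa2 /e1 /e3 dernD.
  rewrite (leib _ _ _ sg2 sn (s - 1)) big_ord_recr /= big1; last first.
    move=> j _; rewrite dernD (vanish (j + 2)%N) ?dot0l ?mulr0 //;
      have := ltn_ord j; lia.
  rewrite add0r binn mul1r subnn dernD; congr (dot (dern _ g t0) _); lia.
have npar : ~ exists c, dern (1 + s) g t0 = c *: u.
  case=> c hc.
  have : (Amat g t0 (1 + s) <= u)%MS.
    apply/row_subP => i; rewrite rowA.
    case: (ltnP i s) => hi.
      by have [c' ->] := par i hi; apply/sub_rVP; exists c'.
    have -> : i.+1 = (1 + s)%N by have := ltn_ord i; lia.
    by rewrite hc; apply/sub_rVP; exists c.
  by move/mxrankS; rewrite r2 ru.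
rewrite kap; split.
- move=> H.
  have : tangent_plane g n t0 (g t0 + 0 *: dern 1 g t0 + 1 *: dern (1 + s) g t0).
    by rewrite -H; exists 0, 1.
  by rewrite /tangent_plane /= scale0r addr0 scale1r (addrC (g t0)) addrK.
- move=> hv; rewrite /osculating_tangent_point /osculating_plane /tangent_plane.
  apply/seteqP; split => p /=.
  + case=> a [b ->].
    have e x y : x + y - x = y :> vec3 R by rewrite addrC addKr.
    by rewrite -(addrA (g t0)) e dotDl !dotZl -/u hun hv !mulr0 addr0.
  + move=> hp.
    have [a [b hab]] := span2 _ u (dern (1 + s) g t0) (n t0) (p - g t0)
      huu hnn hun hv hp npar.
    by exists a, b; rewrite -addrA -hab addrC subrK.
Qed.
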